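(* For all $t_1, t_2 \in \mathcal{L}_s$, $t_1 =_{\mathcal{L}} t_2$ if and only if $t_1 = t_2$ (syntactic equality, i.e. same symbol and same arguments).
   Context: $\mathcal{X}$ is a countable set of variables; a valuation is $\sigma\colon\mathcal{X}\to\mathbb{N}$. For finite $E\subseteq\mathcal{X}$, $x\in\mathcal{X}$, $S\in\mathbb{N}$, the sublevels $A(E,x,S)$ and $B(E,S)$ have values $[A(E,x,S)]_\sigma = 0$ if some $y\in E$ has $\sigma(y)=0$, and $\sigma(x)+S$ otherwise; $[B(E,S)]_\sigma=0$ if some $y\in E$ has $\sigma(y)=0$, and $S$ otherwise. $\mathcal{L}_s$ is the set of sublevels $A(E,x,S)$ with $x \in E$ and $B(E,S)$ with $S>0$. $t_1 =_{\mathcal{L}} t_2$ means $[t_1]_\sigma = [t_2]_\sigma$ for every valuation $\sigma$. *)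

(* Defs.v *)
From mathcomp Require Import all_boot.
From mathcomp Require Import finmap.
Set Implicit Arguments. Unset Strict Implicit. Unset Printing Implicit Defensive.

(* Finite sets E are
   represented by [{fset X}], so syntactic equality of terms compares
   E as a set. *)
Inductive sublevel (X : countType) : Type :=
| SA of {fset X} & X & nat
| SB of {fset X} & nat.

Definition sl_eval (X : countType) (sigma : X -> nat) (t : sublevel X) : nat :=
  match t with
  | SA E x s => if [exists y : E, sigma (val y) == 0] then 0 else sigma x + s
  | SB E s => if [exists y : E, sigma (val y) == 0] then 0 else s
  end.

Definition in_Ls (X : countType) (t : sublevel X) : Prop :=
  match t with
  | SA E x s => x \in E
  | SB _ s => 0 < s
  end.

Definition sl_equiv (X : countType) (t1 t2 : sublevel X) : Prop :=
  forall sigma : X -> nat, sl_eval sigma t1 = sl_eval sigma t2.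

(* Main.v *)
Require Import Defs.
From mathcomp Require Import all_boot.
From mathcomp Require Import finmap.
From mathcomp Require Import zify.
Open Scope fset_scope.
Set Implicit Arguments.

Lemma guardF (X : countType) (sigma : X -> nat) (E : {fset X}) :
  (forall y, y \in E -> sigma y != 0) -> [exists y : E, sigma (val y) == 0] = false.
Proof.
move=> H; apply/existsP => -[y Hy]; by move: (H _ (valP y)); rewrite (eqP Hy).
Qed.

Lemma guardT (X : countType) (sigma : X -> nat) (E : {fset X}) y :
  y \in E -> sigma y = 0 -> [exists y : E, sigma (val y) == 0] = true.
Proof.
move=> Hy H0; apply/existsP; exists [` Hy]; by rewrite /= H0.
Qed.

Definition sgv (X : countType) (E : {fset X}) (k : nat) (y : X) := if y \in E then k else 0.
Arguments sgv {X}.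

Lemma sub_of (X : countType) (E F : {fset X}) k :
  0 < k -> [exists y : F, sgv E k (val y) == 0] = false -> F `<=` E.
Proof.
move=> Hk H; apply/fsubsetP => y Hy; case HE: (y \in E) => //.
by rewrite (@guardT _ (sgv E k) F y Hy) // /sgv HE in H.
Qed.

Lemma ev_sig (X : countType) (E : {fset X}) k : 0 < k ->
  [exists y : E, sgv E k (val y) == 0] = false.
Proof. move=> Hk; apply: guardF => y Hy; by rewrite /sgv Hy -lt0n. Qed.

Theorem corollary30 (X : countType) (t1 t2 : sublevel X) :
  in_Ls t1 -> in_Ls t2 -> (sl_equiv t1 t2 <-> t1 = t2).
Proof.
move=> H1 H2; split; last by move=> ->.
case: t1 H1 => [E x S|E S] /= H1; case: t2 H2 => [F y T|F T] /= H2 Heq.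
- have h1 := Heq (sgv E 1); have h2 := Heq (sgv F 1).
  rewrite /sl_eval ev_sig // in h1; rewrite /sl_eval ev_sig // in h2.
  move: h1; case G1: [exists y0 : F, _] => h1; first by move: h1; rewrite /sgv H1.
  move: h2; case G2: [exists y0 : E, _] => h2; first by move: h2; rewrite /sgv H2.
  have sFE := @sub_of _ _ _ 1 (ltn0Sn 0) G1; have sEF := @sub_of _ _ _ 1 (ltn0Sn 0) G2.
  have EF : E = F by apply/eqP; rewrite eqEfsubset sEF sFE.
  subst F.
  move: h1; rewrite /sgv H1 H2 => /eqP; rewrite eqn_add2l => /eqP <-.
  pose s := fun z => if z == x then 2 else sgv E 1 z.
  have h := Heq s; rewrite /sl_eval in h.
  have gg : [exists y0 : E, s (val y0) == 0] = false.
    by apply: guardF => z Hz; rewrite /s /sgv Hz; case: (z == x).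
  move: h; rewrite gg /s eqxx /sgv H2; case: (y =P x) => [->//|_].
  rewrite /sgv H1 H2 in h2; move=> h; exfalso; lia.
- have h1 := Heq (sgv E 1); have h2 := Heq (sgv E 2).
  rewrite /sl_eval ev_sig // in h1; rewrite /sl_eval ev_sig // in h2.
  have G : forall k, 0 < k -> [exists y0 : F, sgv E k (val y0) == 0] = [exists y0 : F, sgv E 1 (val y0) == 0].
    move=> k Hk; apply/existsP/existsP => -[z Hz]; exists z; move: Hz; rewrite /sgv; by case: (_ \in E) => //; case: k Hk.
  rewrite G // /sgv H1 in h2; rewrite /sgv H1 in h1.
  by rewrite -h1 in h2; move: h2 => /eqP; rewrite eqn_add2r.
- have h1 := Heq (sgv F 1); have h2 := Heq (sgv F 2).
  rewrite /sl_eval ev_sig // in h1; rewrite /sl_eval ev_sig // in h2.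
  have G : forall k, 0 < k -> [exists y0 : E, sgv F k (val y0) == 0] = [exists y0 : E, sgv F 1 (val y0) == 0].
    move=> k Hk; apply/existsP/existsP => -[z Hz]; exists z; move: Hz; rewrite /sgv; by case: (_ \in F) => //; case: k Hk.
  rewrite G // /sgv H2 in h2; rewrite /sgv H2 in h1.
  by rewrite h1 in h2; move: h2 => /eqP; rewrite eqn_add2r.
- have h1 := Heq (sgv E 1); have h2 := Heq (sgv F 1).
  rewrite /sl_eval ev_sig // in h1; rewrite /sl_eval ev_sig // in h2.
  move: h1; case G1: [exists y0 : F, _] => h1; first by rewrite h1 in H1.
  move: h2; case G2: [exists y0 : E, _] => h2; first by rewrite -h2 in H2.
  have sFE := @sub_of _ _ _ 1 (ltn0Sn 0) G1; have sEF := @sub_of _ _ _ 1 (ltn0Sn 0) G2.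
  have EF : E = F by apply/eqP; rewrite eqEfsubset sEF sFE.
  by rewrite EF h1.
Qed.
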